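(* For every positive integer $l$, the set of all positive eigenvalues of the adjacency matrix of the double subdivided star $T_{l,l}$, with any one of them removed, is linearly independent over $\mathbb{Q}$.
   Context: A subdivided star $SK_{1,l}$ is obtained by identifying exactly one pendant (end) vertex from each of $l$ copies of the path $P_3$; the identified vertex is the coalescence vertex. The double subdivided star $T_{l,m}$ is obtained from $SK_{1,l}$ and $SK_{1,m}$ by adding one edge joining their two coalescence vertices. *)

(* Defs.v *)
From HB Require Import structures.
From mathcomp Require Import all_boot all_order all_algebra all_field.
Set Implicit Arguments. Unset Strict Implicit. Unset Printing Implicit Defensive.
Import Order.TTheory GRing.Theory Num.Theory.
Local Open Scope ring_scope.

(* Vertex numbering of the double subdivided star T_{l,m}
   (2l + 2m + 2 vertices, indexed by 'I_(2*l+2*m+2)):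
   - 0 : coalescence vertex of SK_{1,l};  1 : coalescence vertex of SK_{1,m};
   - 2+2k, 3+2k (k < l)       : middle and end vertex of the k-th P_3 of SK_{1,l};
   - 2+2l+2k, 3+2l+2k (k < m) : middle and end vertex of the k-th P_3 of SK_{1,m}.
   Edges: 0-1 (the added edge), 0-(2+2k), (2+2k)-(3+2k),
          1-(2+2l+2k), (2+2l+2k)-(3+2l+2k). *)
Definition tedge_dir (l m i j : nat) : bool :=
  [|| (i == 0%N) && (j == 1%N),
      [&& i == 0%N, (2 <= j < 2 + 2 * l)%N & ~~ odd j],
      [&& (2 <= i < 2 + 2 * l)%N, ~~ odd i & j == i.+1],
      [&& i == 1%N, (2 + 2 * l <= j < 2 + 2 * l + 2 * m)%N & ~~ odd j]
    | [&& (2 + 2 * l <= i < 2 + 2 * l + 2 * m)%N, ~~ odd i & j == i.+1]].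

Definition tedge (l m i j : nat) : bool := tedge_dir l m i j || tedge_dir l m j i.

Definition Tadj (l m : nat) : 'M[algC]_(2 * l + 2 * m + 2) :=
  \matrix_(i, j) (tedge l m i j)%:R.

Definition pos_eigenvalue (n : nat) (A : 'M[algC]_n) (x : algC) : bool :=
  eigenvalue A x && (0 < x).

Definition Q_lin_indep (P : pred algC) : Prop :=
  forall (s : seq algC) (c : algC -> rat),
    uniq s -> (forall x, x \in s -> P x) ->
    \sum_(x <- s) ratr (c x) * x = 0 ->
    forall x, x \in s -> c x = 0.

(* Main.v *)
Require Import Defs.
From mathcomp Require Import all_boot all_order all_algebra all_field.
From mathcomp Require Import zify ring lra.
Import GRing.Theory Num.Theory.
Local Open Scope ring_scope.

Lemma sum_pairs (F : nat -> algC) m l :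
  \sum_(m <= i < m + 2 * l) F i = \sum_(0 <= k < l) (F (m + 2 * k)%N + F (m + 2 * k).+1).
Proof.
elim: l => [|l IH]; first by rewrite muln0 addn0 !big_geq.
rewrite big_nat_recr //= -IH.
have -> : (m + 2 * l.+1 = (m + 2 * l).+2)%N by lia.
rewrite big_nat_recr ?big_nat_recr /=; [|lia|lia].
by rewrite addrA.
Qed.

Lemma sum_delta (G : nat -> algC) l k0 : (k0 < l)%N ->
  \sum_(0 <= k < l) G k * (k == k0)%:R = G k0.
Proof.
move=> h; rewrite big_mkord (bigD1 (Ordinal h)) //= eqxx mulr1 big1 ?addr0 //.
move=> i /eqP hi; have /negbTE -> : (nat_of_ord i != k0).
  by apply/eqP => e; apply: hi; apply: val_inj.
by rewrite mulr0.
Qed.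

Lemma col_sum l (F : nat -> algC) (T : nat -> bool) c0 c1 (a b a' b' : nat -> bool) :
  T 0%N = c0 -> T 1%N = c1 ->
  (forall k, (k < l)%N -> T (2 + 2 * k)%N = a k) ->
  (forall k, (k < l)%N -> T (3 + 2 * k)%N = b k) ->
  (forall k, (k < l)%N -> T (2 + 2 * l + 2 * k)%N = a' k) ->
  (forall k, (k < l)%N -> T (3 + 2 * l + 2 * k)%N = b' k) ->
  \sum_(0 <= i < 2 * l + 2 * l + 2) F i * (T i)%:R =
  F 0%N * c0%:R + F 1%N * c1%:R
  + \sum_(0 <= k < l) (F (2 + 2 * k)%N * (a k)%:R + F (3 + 2 * k)%N * (b k)%:R)
  + \sum_(0 <= k < l) (F (2 + 2 * l + 2 * k)%N * (a' k)%:R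
                       + F (3 + 2 * l + 2 * k)%N * (b' k)%:R).
Proof.
move=> h0 h1 ha hb ha' hb'.
have -> : (2 * l + 2 * l + 2 = (2 + 2 * l) + 2 * l)%N by lia.
rewrite (@big_cat_nat _ _ _ (2 + 2 * l) 0 (2 + 2 * l + 2 * l)) //=; last by lia.
rewrite (@big_cat_nat _ _ _ 2 0 (2 + 2 * l)) //=.
rewrite !sum_pairs big_nat_recr //= big_nat1 h0 h1.
congr (_ + _ + _); apply: eq_big_nat => k /andP[_ hk].
  by rewrite ha // -[(2 + 2 * k).+1]/(3 + 2 * k)%N hb.
rewrite ha' // -[(2 + 2 * l + 2 * k).+1]/((3 + 2 * l + 2 * k)%N).
by rewrite hb'.
Qed.

Definition pp (l : nat) (x : algC) : algC := x ^+ 3 - x ^+ 2 - (l.+1)%:R * x + 1.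

Lemma sum_ff (F G : nat -> algC) l :
  \sum_(0 <= k < l) (F k * false%:R + G k * false%:R) = 0.
Proof. by rewrite big1 // => k _; rewrite !mulr0 addr0. Qed.

Lemma sum_af (F G : nat -> algC) l k0 : (k0 < l)%N ->
  \sum_(0 <= k < l) (F k * (k == k0)%:R + G k * false%:R) = F k0.
Proof.
move=> h; rewrite -(@sum_delta F l k0 h); apply: eq_bigr => k _; by rewrite mulr0 addr0.
Qed.

Lemma sum_fb (F G : nat -> algC) l k0 : (k0 < l)%N ->
  \sum_(0 <= k < l) (F k * false%:R + G k * (k == k0)%:R) = G k0.
Proof.
move=> h; rewrite -(@sum_delta G l k0 h); apply: eq_bigr => k _; by rewrite mulr0 add0r.
Qed.

Lemma sum_tf (F G : nat -> algC) l :
  \sum_(0 <= k < l) (F k * true%:R + G k * false%:R) = \sum_(0 <= k < l) F k.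
Proof. by apply: eq_bigr => k _; rewrite mulr0 addr0 mulr1. Qed.

Lemma index_cases l j : (j < 2 * l + 2 * l + 2)%N ->
  [\/ j = 0%N, j = 1%N | exists2 k, (k < l)%N &
     [\/ j = 2 + 2 * k, j = 3 + 2 * k, j = 2 + 2 * l + 2 * k | j = 3 + 2 * l + 2 * k]%N].
Proof.
move=> hj.
case: (ltnP j 2) => j2.
  by case: j hj j2 => [|[|j]] _ _ //; [constructor 1 | constructor 2].
constructor 3.
have [hA|hB] : (j < 2 + 2 * l)%N \/ (2 + 2 * l <= j)%N by lia.
  exists ((j - 2) %/ 2)%N; first by lia.
  have [e|e] : j = (2 + 2 * ((j - 2) %/ 2))%N \/ j = (3 + 2 * ((j - 2) %/ 2))%N by lia.
    by constructor 1. by constructor 2.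
exists ((j - 2 - 2 * l) %/ 2)%N; first by lia.
have [e|e] : j = (2 + 2 * l + 2 * ((j - 2 - 2 * l) %/ 2))%N \/
             j = (3 + 2 * l + 2 * ((j - 2 - 2 * l) %/ 2))%N by lia.
  by constructor 3. by constructor 4.
Qed.

Ltac tsolve := rewrite /tedge /tedge_dir ?(oddD, oddM) /=; lia.

Lemma eig_root l x : (0 < l)%N -> eigenvalue (Tadj l l) x ->
  (x ^+ 2 - 1) * pp l x * pp l (- x) = 0.
Proof.
move=> hl /eigenvalueP [v hv vnz].
pose g (i : nat) : algC := odflt 0 (omap (v 0) (insub i : option 'I_(2 * l + 2 * l + 2))).
have gE : forall i : 'I_(2 * l + 2 * l + 2), g i = v 0 i by move=> i; rewrite /g valK.
have col : forall J, (J < 2 * l + 2 * l + 2)%N ->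
    \sum_(0 <= i < 2 * l + 2 * l + 2) g i * (tedge l l i J)%:R = x * g J.
  move=> J hJ.
  have -> : g J = v 0 (Ordinal hJ) := gE (Ordinal hJ).
  have := congr1 (fun M : 'M[algC]_(1, 2 * l + 2 * l + 2) => M 0 (Ordinal hJ)) hv; rewrite /= !mxE => <-.
  rewrite big_mkord; apply: eq_bigr => i _; by rewrite gE mxE.
have E3 : forall k0, (k0 < l)%N -> g (2 + 2 * k0)%N = x * g (3 + 2 * k0)%N.
  move=> k0 hk0; rewrite -col; last by lia.
  rewrite (@col_sum l g (fun i => tedge l l i (3 + 2 * k0)) false false
     (fun k => k == k0) (fun _ => false) (fun _ => false) (fun _ => false));
   try (move=> *; tsolve).
  by rewrite sum_af // sum_ff !mulr0 !addr0 add0r.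
have E2 : forall k0, (k0 < l)%N -> g 0%N + g (3 + 2 * k0)%N = x * g (2 + 2 * k0)%N.
  move=> k0 hk0; rewrite -col; last by lia.
  rewrite (@col_sum l g (fun i => tedge l l i (2 + 2 * k0)) true false
     (fun _ => false) (fun k => k == k0) (fun _ => false) (fun _ => false));
   try (move=> *; tsolve).
  by rewrite sum_fb // sum_ff !mulr0 mulr1 !addr0.
have E3' : forall k0, (k0 < l)%N -> g (2 + 2 * l + 2 * k0)%N = x * g (3 + 2 * l + 2 * k0)%N.
  move=> k0 hk0; rewrite -col; last by lia.
  rewrite (@col_sum l g (fun i => tedge l l i (3 + 2 * l + 2 * k0)) false false
     (fun _ => false) (fun _ => false) (fun k => k == k0) (fun _ => false));
   try (move=> *; tsolve).
  by rewrite sum_af // sum_ff !mulr0 !addr0 !add0r.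
have E2' : forall k0, (k0 < l)%N -> g 1%N + g (3 + 2 * l + 2 * k0)%N = x * g (2 + 2 * l + 2 * k0)%N.
  move=> k0 hk0; rewrite -col; last by lia.
  rewrite (@col_sum l g (fun i => tedge l l i (2 + 2 * l + 2 * k0)) false true
     (fun _ => false) (fun _ => false) (fun _ => false) (fun k => k == k0));
   try (move=> *; tsolve).
  by rewrite sum_fb // sum_ff !mulr0 mulr1 !addr0 add0r.
have E0 : g 1%N + \sum_(0 <= k < l) g (2 + 2 * k)%N = x * g 0%N.
  rewrite -col; last by lia.
  rewrite (@col_sum l g (fun i => tedge l l i 0) false true
     (fun _ => true) (fun _ => false) (fun _ => false) (fun _ => false));
   try (move=> *; tsolve).
  by rewrite sum_tf sum_ff !mulr0 mulr1 !addr0 add0r.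
have E1 : g 0%N + \sum_(0 <= k < l) g (2 + 2 * l + 2 * k)%N = x * g 1%N.
  rewrite -col; last by lia.
  rewrite (@col_sum l g (fun i => tedge l l i 1) true false
     (fun _ => false) (fun _ => false) (fun _ => true) (fun _ => false));
   try (move=> *; tsolve).
  by rewrite sum_tf sum_ff !mulr0 mulr1 !addr0.
have H3 : forall k, (k < l)%N -> (x ^+ 2 - 1) * g (3 + 2 * k)%N = g 0%N.
  move=> k hk; have := E2 k hk; rewrite E3 // => e.
  have -> : g 0%N = x * (x * g (3 + 2 * k)%N) - g (3 + 2 * k)%N by rewrite -e addrK.
  ring.
have H3' : forall k, (k < l)%N -> (x ^+ 2 - 1) * g (3 + 2 * l + 2 * k)%N = g 1%N.
  move=> k hk; have := E2' k hk; rewrite E3' // => e.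
  have -> : g 1%N = x * (x * g (3 + 2 * l + 2 * k)%N) - g (3 + 2 * l + 2 * k)%N by rewrite -e addrK.
  ring.
have S1 : (x ^+ 2 - 1) * \sum_(0 <= k < l) g (2 + 2 * k)%N = l%:R * x * g 0%N.
  rewrite mulr_sumr (eq_big_nat _ _ (F2 := fun _ => x * g 0%N)).
    by rewrite sumr_const_nat subn0 -mulr_natl; ring.
  move=> k /andP[_ hk]; rewrite E3 // -(H3 k hk); ring.
have S2 : (x ^+ 2 - 1) * \sum_(0 <= k < l) g (2 + 2 * l + 2 * k)%N = l%:R * x * g 1%N.
  rewrite mulr_sumr (eq_big_nat _ _ (F2 := fun _ => x * g 1%N)).
    by rewrite sumr_const_nat subn0 -mulr_natl; ring.
  move=> k /andP[_ hk]; rewrite E3' // -(H3' k hk); ring.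
have eqA : (x ^+ 2 - 1) * g 1%N + l%:R * x * g 0%N = (x ^+ 2 - 1) * x * g 0%N.
  by rewrite -S1 -mulrDr E0 mulrA.
have eqB : (x ^+ 2 - 1) * g 0%N + l%:R * x * g 1%N = (x ^+ 2 - 1) * x * g 1%N.
  by rewrite -S2 -mulrDr E1 mulrA.
apply/eqP; apply: contraT; rewrite !mulf_eq0 !negb_or => /andP[/andP[h1 h2] h3].
have hs : (g 0%N + g 1%N) * pp l x = 0.
  have -> : (g 0%N + g 1%N) * pp l x =
     ((x ^+ 2 - 1) * x * g 0%N - ((x ^+ 2 - 1) * g 1%N + l%:R * x * g 0%N))
     + ((x ^+ 2 - 1) * x * g 1%N - ((x ^+ 2 - 1) * g 0%N + l%:R * x * g 1%N)).
    rewrite /pp; ring.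
  by rewrite eqA eqB !subrr addr0.
have hd : (g 0%N - g 1%N) * pp l (- x) = 0.
  have -> : (g 0%N - g 1%N) * pp l (- x) =
     ((x ^+ 2 - 1) * x * g 1%N - ((x ^+ 2 - 1) * g 0%N + l%:R * x * g 1%N))
     - ((x ^+ 2 - 1) * x * g 0%N - ((x ^+ 2 - 1) * g 1%N + l%:R * x * g 0%N)).
    rewrite /pp; ring.
  by rewrite eqA eqB !subrr.
move: hs hd => /eqP; rewrite mulf_eq0 (negbTE h2) orbF => /eqP hs.
move/eqP; rewrite mulf_eq0 (negbTE h3) orbF => /eqP hd.
have g0 : g 0%N = 0.
  have : g 0%N * 2 = 0.
    have -> : g 0%N * 2 = (g 0%N + g 1%N) + (g 0%N - g 1%N) by ring.
    by rewrite hs hd addr0.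
  by move/eqP; rewrite mulf_eq0 pnatr_eq0 orbF => /eqP.
have g1 : g 1%N = 0 by move: hs; rewrite g0 add0r.
have Z3 : forall k, (k < l)%N -> g (3 + 2 * k)%N = 0.
  move=> k hk; have := H3 k hk; rewrite g0 => /eqP; rewrite mulf_eq0 (negbTE h1) /=.
  by move/eqP.
have Z3' : forall k, (k < l)%N -> g (3 + 2 * l + 2 * k)%N = 0.
  move=> k hk; have := H3' k hk; rewrite g1 => /eqP; rewrite mulf_eq0 (negbTE h1) /=.
  by move/eqP.
suff : v == 0 by rewrite (negbTE vnz).
apply/eqP/rowP => j; rewrite mxE -gE.
have [->|->|[k hk [->|->|->|->]]] := @index_cases l j (ltn_ord j).
- exact: g0.
- exact: g1.
- by rewrite E3 // Z3 // mulr0.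
- exact: Z3.
- by rewrite E3' // Z3' // mulr0.
- exact: Z3'.
Qed.

Lemma noratroot l x : (0 < l)%N -> x \in Crat -> pp l x != 0.
Proof.
move=> hl xQ; apply/eqP => px.
pose P : {poly algC} := Poly [:: 1; - (l.+1)%:R; -1; 1].
have rP : root P x.
  apply/eqP; rewrite /P horner_Poly /= -[in RHS]px /pp; ring.
have mP : P \is monic.
  by rewrite monicE /lead_coef /P (@PolyK _ 1) //= oner_neq0.
have oP : P \is a polyOver Num.int.
  apply/polyOverP => i; rewrite coef_Poly.
  case: i => [|[|[|[|i]]]] /=; rewrite ?rpredN ?natr_int ?rpred1 ?rpred0 //.
  by rewrite nth_nil rpred0.
have xA := root_monic_Aint rP mP oP.
have /intrP [m xm] := Cint_rat_Aint xQ xA.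
move: px; rewrite xm /pp.
have -> : m%:~R ^+ 3 - m%:~R ^+ 2 - (l.+1)%:R * m%:~R + 1 = 
   ((m ^+ 3 - m ^+ 2 - (l.+1)%:Z * m + 1)%:~R : algC).
  by rewrite !rmorphD !rmorphN /= !rmorphXn rmorphM /= rmorph1 pmulrn.
move/eqP; rewrite intr_eq0 => /eqP hm.
have : (m %| 1)%Z.
  apply/dvdzP; exists (- (m ^+ 2 - m - (l.+1)%:Z)).
  apply/eqP; rewrite -subr_eq0; apply/eqP; rewrite -hm; ring.
rewrite dvdz1 => hm1.
have : m = 1 \/ m = -1 by case: m {xm hm} hm1 => n /=; [move/eqP->; left | move/eqP=> [->]; right].
case => mE; rewrite mE in hm; move: hm; rewrite /=; lia.
Qed.

Lemma lin_rat (x a b : algC) : x \notin Crat -> a \in Crat -> b \in Crat ->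
  a + b * x = 0 -> a = 0 /\ b = 0.
Proof.
move=> xQ aQ bQ h.
have [b0|bnz] := eqVneq b 0.
  by move: h; rewrite b0 mul0r addr0.
exfalso; move/negP: xQ; apply.
have -> : x = - a / b.
  move/eqP: h; rewrite addrC addr_eq0 => /eqP h.
  by rewrite -h mulrC mulKf.
by rewrite rpred_div ?rpredN.
Qed.

Lemma deg3 l (x a b c : algC) : (0 < l)%N -> pp l x = 0 ->
  a \in Crat -> b \in Crat -> c \in Crat ->
  a + b * x + c * x ^+ 2 = 0 -> [/\ a = 0, b = 0 & c = 0].
Proof.
move=> hl px aQ bQ cQ h.
have xQ : x \notin Crat by apply/negP => /(noratroot _ _ hl); rewrite px eqxx.
have [c0|cnz] := eqVneq c 0.
  move: h; rewrite c0 mul0r addr0 => h.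
  by have [-> ->] := lin_rat _ _ _ xQ aQ bQ h.
exfalso.
pose A := a / c; pose B := b / c.
have AQ : A \in Crat by rewrite rpred_div.
have BQ : B \in Crat by rewrite rpred_div.
have hq : x ^+ 2 + B * x + A = 0.
  apply: (mulfI cnz); rewrite mulr0 -[RHS]h /A /B; field; exact: cnz.
pose e := B ^+ 2 - A + B - (l.+1)%:R; pose f := A * B + A + 1.
have ef : f + e * x = 0.
  have -> : f + e * x = pp l x - (x - 1 - B) * (x ^+ 2 + B * x + A).
    rewrite /pp /e /f; ring.
  by rewrite px hq mulr0 subr0.
have eQ : e \in Crat by rewrite /e !(rpredB, rpredD, rpredX, rpred_nat).
have fQ : f \in Crat by rewrite /f; apply: rpredD; [apply: rpredD; [apply: rpredM|]|apply: rpred1].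
have [f0 e0] := lin_rat _ _ _ xQ fQ eQ ef.
have : pp l (B + 1) = 0.
  have -> : pp l (B + 1) = (B + 1) * e + f by rewrite /pp /e /f; ring.
  by rewrite e0 f0 mulr0 addr0.
apply/eqP; apply: noratroot hl _.
by rewrite rpredD ?rpred1.
Qed.

Lemma quad_pos (B : algC) : B \in Crat -> 1 + B + B ^+ 2 != 0.
Proof.
case/CratP => q ->.
have -> : 1 + ratr q + ratr q ^+ 2 = ratr (1 + q + q ^+ 2) :> algC.
  by rewrite !rmorphD rmorph1 rmorphXn.
rewrite fmorph_eq0; apply/eqP => h.
have : 0 < 1 + q + q ^+ 2 by nra.
by rewrite h Order.POrderTheory.ltxx.
Qed.

Lemma pair_indep l (x y a b c : algC) : (0 < l)%N -> pp l x = 0 -> pp l y = 0 -> x != y ->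
  a \in Crat -> b \in Crat -> c \in Crat ->
  a + b * x + c * y = 0 -> [/\ a = 0, b = 0 & c = 0].
Proof.
move=> hl px py xy aQ bQ cQ h.
have xQ : x \notin Crat by apply/negP => /(noratroot _ _ hl); rewrite px eqxx.
have [c0|cnz] := eqVneq c 0.
  move: h; rewrite c0 mul0r addr0 => h.
  by have [-> ->] := lin_rat _ _ _ xQ aQ bQ h.
exfalso.
pose A := - a / c; pose B := - b / c.
have AQ : A \in Crat by rewrite rpred_div ?rpredN.
have BQ : B \in Crat by rewrite rpred_div ?rpredN.
have yE : y = A + B * x.
  apply: (mulfI cnz).
  have -> : c * y = - (a + b * x) by apply/eqP; rewrite -addr_eq0 addrC h.
  rewrite /A /B; field; exact: cnz.
clearbody A B.
have hxy : x ^+ 2 + x * y + y ^+ 2 - x - y - (l.+1)%:R = 0.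
  have xy0 : x - y != 0 by rewrite subr_eq0.
  apply: (mulfI xy0); rewrite mulr0 -[RHS](subrr 0) -{1}px -py /pp; ring.
move: hxy; rewrite yE => hxy.
have := deg3 _ _ (A ^+ 2 - A - (l.+1)%:R) (A + 2 * A * B - 1 - B) (1 + B + B ^+ 2) hl px.
case.
- by rewrite !(rpredB, rpredX, rpred_nat).
- by rewrite !(rpredB, rpredD, rpredM, rpred_nat, rpred1).
- by rewrite !(rpredD, rpredX, rpred1).
- by rewrite -[RHS]hxy; ring.
move=> _ _ /eqP; apply/negP; exact: quad_pos.
Qed.

Import Order.TTheory.

Lemma roots3 l : exists r1 r2 r3 : algC,
  [/\ r1 + r2 + r3 = 1, r1 * r2 + r1 * r3 + r2 * r3 = - (l.+1)%:R & r1 * r2 * r3 = -1].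
Proof.
have [r1 h1] := @solve_monicpoly algC 3 (nth 0 [:: -1; (l.+1)%:R; 1]) isT.
rewrite !big_ord_recr big_ord0 /= in h1.
pose s := 1 - r1; pose q := r1 ^+ 2 - r1 - (l.+1)%:R.
have [r2 h2] := @solve_monicpoly algC 2 (nth 0 [:: -q; s]) isT.
rewrite !big_ord_recr big_ord0 /= in h2.
exists r1, r2, (s - r2); split.
- rewrite /s; ring.
- have -> : r1 * r2 + r1 * (s - r2) + r2 * (s - r2) = r1 * s + (s * r2 - r2 ^+ 2) by ring.
  rewrite h2 /s /q; ring.
- have -> : r1 * r2 * (s - r2) = r1 * (s * r2 - r2 ^+ 2) by ring.
  move/eqP: h1; rewrite -subr_eq0 => /eqP h1.
  rewrite h2; apply/eqP; rewrite -subr_eq0 -[X in _ == X]h1; apply/eqP; rewrite /s /q; ring.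
Qed.

Lemma eq_by (a b c d : algC) : a - b = c - d -> c = d -> a = b.
Proof. by move=> h e; apply/eqP; rewrite -subr_eq0 h e subrr. Qed.
Arguments eq_by {a b c d}.

Lemma ppF l r1 r2 r3 y : r1 + r2 + r3 = 1 -> r1 * r2 + r1 * r3 + r2 * r3 = - (l.+1)%:R ->
  r1 * r2 * r3 = -1 -> pp l y = (y - r1) * (y - r2) * (y - r3).
Proof.
move=> V1 V2 V3; apply/eqP; rewrite -subr_eq0; apply/eqP.
have -> : pp l y - (y - r1) * (y - r2) * (y - r3) =
  (r1 + r2 + r3 - 1) * y ^+ 2 + (- (l.+1)%:R - (r1 * r2 + r1 * r3 + r2 * r3)) * y
  + (1 + r1 * r2 * r3) by rewrite /pp; ring.
by rewrite V1 V2 V3 subrr subrr mul0r mul0r add0r; ring.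
Qed.

Lemma dist_roots l r s t : (0 < l)%N -> pp l r = 0 ->
  r + s + t = 1 -> r * s + r * t + s * t = - (l.+1)%:R -> r != s.
Proof.
move=> hl pr V1 V2; apply/eqP => rs; subst s.
have tE : t = 1 - 2 * r by apply: (eq_by ^~ V1); ring.
have := @deg3 l r (l.+1)%:R 2 (-3) hl pr.
case; rewrite ?rpred_nat ?rpredN ?rpred_nat //.
  apply: (eq_by ^~ V2); rewrite tE; ring.
by move=> _ _ /eqP; rewrite oppr_eq0 pnatr_eq0.
Qed.

Lemma no_pm l r : (0 < l)%N -> pp l r = 0 -> pp l (- r) = 0 -> False.
Proof.
move=> hl p1 p2.
have := @deg3 l r 2 0 (-2) hl p1.
case; rewrite ?rpred_nat ?rpredN ?rpred0 ?rpred_nat //.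
  have e : pp l r + pp l (- r) = 0 by rewrite p1 p2 addr0.
  apply: (eq_by ^~ e); rewrite /pp; ring.
by move=> _ _ /eqP; rewrite oppr_eq0 pnatr_eq0.
Qed.

Lemma pp1 l : (0 < l)%N -> pp l 1 != 0.
Proof.
move=> hl; have -> : pp l 1 = - l%:R by rewrite /pp; ring.
by rewrite oppr_eq0 pnatr_eq0 -lt0n.
Qed.

Lemma ppN1 l : (0 < l)%N -> pp l (-1) != 0.
Proof.
move=> hl; have -> : pp l (-1) = l%:R by rewrite /pp; ring.
by rewrite pnatr_eq0 -lt0n.
Qed.

Definition rho (r : algC) : algC := if 0 < r then r else - r.
Definition sg (r : algC) : algC := if 0 < r then 1 else -1.

Lemma rhoE r : rho r = sg r * r.
Proof. by rewrite /rho /sg; case: ifP => _; rewrite ?mul1r ?mulN1r. Qed.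

Lemma sgQ r : sg r \in Crat.
Proof. by rewrite /sg; case: ifP => _; rewrite ?rpredN rpred1. Qed.

Lemma sg_neq0 r : sg r != 0.
Proof. by rewrite /sg; case: ifP => _; rewrite ?oppr_eq0 oner_neq0. Qed.

Lemma rho_cases r : rho r = r \/ rho r = - r.
Proof. by rewrite /rho; case: ifP => _; [left|right]. Qed.

Lemma rho_ne1 l r : (0 < l)%N -> pp l r = 0 -> rho r != 1.
Proof.
move=> hl pr; apply/eqP => e; have [e'|e'] := rho_cases r; rewrite e' in e.
  by move: (pp1 _ hl); rewrite -e pr eqxx.
by move: (ppN1 _ hl); rewrite -e opprK pr eqxx.
Qed.

Lemma rho_ne l r s : (0 < l)%N -> pp l r = 0 -> pp l s = 0 -> r != s -> rho r != rho s.
Proof.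
move=> hl pr ps rs; apply/eqP => e.
have [e1|e1] := rho_cases r; have [e2|e2] := rho_cases s; rewrite e1 e2 in e.
- by rewrite e eqxx in rs.
- by apply: (no_pm _ _ hl ps); rewrite -e.
- by apply: (no_pm _ _ hl pr); rewrite e.
- by move: rs; rewrite -(opprK r) e opprK eqxx.
Qed.

Theorem corollary2p3 (l : nat) (hl : (0 < l)%N) (a0 : algC) :
  pos_eigenvalue (Tadj l l) a0 ->
  Q_lin_indep (fun x => pos_eigenvalue (Tadj l l) x && (x != a0)).
Proof.
move=> ha0 s c us hs hsum x xs.
have [r1 [r2 [r3 [V1 V2 V3]]]] := roots3 l.
have pF y := ppF l r1 r2 r3 y V1 V2 V3.
have pr1 : pp l r1 = 0 by rewrite pF subrr !mul0r.
have pr2 : pp l r2 = 0 by rewrite pF subrr mulr0 mul0r.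
have pr3 : pp l r3 = 0 by rewrite pF subrr mulr0.
have d12 : r1 != r2 by apply: (dist_roots _ _ _ r3 hl pr1 V1 V2).
have d13 : r1 != r3.
  by apply: (dist_roots _ _ _ r2 hl pr1); [rewrite -V1; ring | rewrite -V2; ring].
have d23 : r2 != r3.
  by apply: (dist_roots _ _ _ r1 hl pr2); [rewrite -V1; ring | rewrite -V2; ring].
pose U := [:: 1; rho r1; rho r2; rho r3].
have posU : forall y, pos_eigenvalue (Tadj l l) y -> y \in U.
  move=> y /andP[ey py]; have := eig_root l y hl ey.
  move/eqP; rewrite !mulf_eq0 => /orP[/orP[h|h]|h].
  - have : (y - 1) * (y + 1) == 0 by rewrite -(eqP h); apply/eqP; ring.
    rewrite mulf_eq0 => /orP[|h1].
      by rewrite subr_eq0 => /eqP ->; rewrite !inE eqxx.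
    have : 0 < y + 1 by rewrite addr_gt0 // ltr01.
    by rewrite (eqP h1) ltxx.
  - move: h; rewrite pF !mulf_eq0 !subr_eq0 => /orP[/orP[]|] /eqP e;
      rewrite !inE /rho -e py eqxx ?orbT //.
  - move: h; rewrite pF !mulf_eq0 !subr_eq0 => /orP[/orP[]|] /eqP e;
      rewrite !inE /rho -e oppr_gt0 (lt_gtF py) opprK eqxx ?orbT //.
have uU : uniq U.
  rewrite /U /= !inE !negb_or !andbT.
  rewrite ![1 == _]eq_sym (rho_ne1 l r1 hl pr1) (rho_ne1 l r2 hl pr2) (rho_ne1 l r3 hl pr3).
  by rewrite (rho_ne l r1 r2 hl pr1 pr2 d12) (rho_ne l r1 r3 hl pr1 pr3 d13) (rho_ne l r2 r3 hl pr2 pr3 d23).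
pose d u : algC := if u \in s then ratr (c u) else 0.
have dQ : forall u, d u \in Crat by move=> u; rewrite /d; case: ifP => _; rewrite ?Crat_rat ?rpred0.
have hU : \sum_(u <- U) d u * u = 0.
  rewrite -[RHS]hsum.
  transitivity (\sum_(u <- U | u \in s) ratr (c u) * u).
    by rewrite [RHS]big_mkcond; apply: eq_bigr => u _; rewrite /d; case: ifP => _; rewrite ?mul0r.
  rewrite -big_filter; apply: perm_big; apply: uniq_perm.
  - by rewrite filter_uniq.
  - exact: us.
  move=> y; rewrite mem_filter; apply/andP/idP => [[]//|ys]; split => //.
  by apply: posU; have /andP[] := hs y ys.
move: hU; rewrite /U !big_cons big_nil.
have D1Q := dQ (rho r1); have D2Q := dQ (rho r2); have D3Q := dQ (rho r3); have D0Q := dQ 1.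
set D0 := d 1 in D0Q *; set D1 := d (rho r1) in D1Q *; set D2 := d (rho r2) in D2Q *;
  set D3 := d (rho r3) in D3Q *.
rewrite !rhoE => hU.
have r3E : r3 = 1 - r1 - r2 by apply: (eq_by ^~ V1); ring.
have := pair_indep l r1 r2 (D0 + D3 * sg r3) (D1 * sg r1 - D3 * sg r3)
  (D2 * sg r2 - D3 * sg r3) hl pr1 pr2 d12.
case.
- by rewrite rpredD ?rpredM ?sgQ.
- by rewrite rpredB ?rpredM ?sgQ.
- by rewrite rpredB ?rpredM ?sgQ.
- by rewrite -[RHS]hU r3E; ring.
move=> hA hB hC.
have a0s : a0 \notin s by apply/negP => /hs; rewrite eqxx andbF.
have da0 : d a0 = 0 by rewrite /d (negbTE a0s).
have sgz : forall (D r : algC), D * sg r = 0 -> D = 0.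
  by move=> D r /eqP; rewrite mulf_eq0 (negbTE (sg_neq0 _)) orbF => /eqP.
have hD3 : D3 * sg r3 = 0.
  move: (posU a0 ha0); rewrite !inE => /orP[|/orP[|/orP[]]] /eqP e.
  - have D00 : D0 = 0 by rewrite /D0 -e.
    by rewrite D00 add0r in hA.
  - have D10 : D1 = 0 by rewrite /D1 -e.
    by move: hB; rewrite D10 mul0r sub0r => /eqP; rewrite oppr_eq0 => /eqP.
  - have D20 : D2 = 0 by rewrite /D2 -e.
    by move: hC; rewrite D20 mul0r sub0r => /eqP; rewrite oppr_eq0 => /eqP.
  - have D30 : D3 = 0 by rewrite /D3 -e.
    by rewrite D30 mul0r.
have D30 : D3 = 0 := sgz _ _ hD3.
have D10 : D1 = 0 by move: hB; rewrite hD3 subr0 => /sgz.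
have D20 : D2 = 0 by move: hC; rewrite hD3 subr0 => /sgz.
have D00 : D0 = 0 by move: hA; rewrite hD3 addr0.
have xU := posU x (proj1 (andP (hs x xs))).
have dx : d x = 0.
  by move: xU; rewrite !inE => /orP[|/orP[|/orP[]]] /eqP ->.
by move: dx; rewrite /d xs => /eqP; rewrite fmorph_eq0 => /eqP.
Qed.
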